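(* Let $K$ be a field of characteristic $0$ and $\mathcal{H}$ a finite-dimensional associative $K$-algebra with $1$ which is split semisimple and symmetric with trace form $\tau\colon\mathcal{H}\to K$, and let $\dagger\colon\mathcal{H}\to\mathcal{H}$ be a $K$-linear anti-involution. Assume there exists a $\dagger$-symmetric basis $B_0$ of $\mathcal{H}$. Then $$\mathrm{trace}(\dagger\colon\mathcal{H}\to\mathcal{H})=\sum_{E\in\mathrm{Irr}(\mathcal{H})}\nu_E\dim E.$$ In particular, if $B_0=B_0^\vee$ (as sets), then $|\{b\in B_0\mid b^\vee=b\}|=\sum_{E\in\mathrm{Irr}(\mathcal{H})}\nu_E\dim E$.
   Context: $\mathrm{Irr}(\mathcal{H})$ denotes the set of simple $\mathcal{H}$-modules up to isomorphism; $\chi_E(h)=\mathrm{trace}(h,E)$. The Schur elements $c_E\in K\setminus\{0\}$ are defined by $\tau=\sum_{E\in\mathrm{Irr}(\mathcal{H})}c_E^{-1}\chi_E$. For a basis $B$ of $\mathcal{H}$, the dual basis $B^\vee=\{b^\vee\}$ is defined by $\tau(b'b^\vee)=\delta_{b,b'}$. A basis $B_0$ is $\dagger$-symmetric if $b^\dagger=b^\vee$ for all $b\in B_0$. For $E\in\mathrm{Irr}(\mathcal{H})$, $\nu_E:=\frac{1}{c_E\dim E}\sum_{b\in B_0}\chi_E(b^2)$ (which lies in $\{0,\pm1\}$ and is independent of the choice of $\dagger$-symmetric basis $B_0$). *)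

(* Defs.v *)
From HB Require Import structures.
From mathcomp Require Import all_boot all_order all_algebra falgebra.
Set Implicit Arguments. Unset Strict Implicit. Unset Printing Implicit Defensive.
Import GRing.Theory.
Local Open Scope ring_scope.

Section Defs.
Variables (K : fieldType) (H : falgType K).

Definition lin_trace (f : H -> H) : K :=
  \sum_(i < \dim {:H}) coord (vbasis {:H}) i (f (tnth (vbasis {:H}) i)).

(* unital K-algebra morphism H -> M_d(K), i.e. a d-dimensional H-module K^d *)
Definition alg_rep (d : nat) (rho : H -> 'M[K]_d) : Prop :=
  [/\ linear rho, rho 1 = 1%:M & forall a b, rho (a * b) = rho a *m rho b].

Definition split_semisimple : Prop :=
  exists (s : nat) (m : 'I_s -> nat) (phi : forall i, H -> 'M[K]_(m i)),
    [/\ forall i, (0 < m i)%N, forall i, alg_rep (phi i),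
        (forall a b, (forall i, phi i a = phi i b) -> a = b) &
        (forall M : forall i, 'M[K]_(m i), exists a, forall i, phi i a = M i)].

Definition simple_rep (d : nat) (rho : H -> 'M[K]_d) : Prop :=
  [/\ alg_rep rho, (0 < d)%N &
      forall U : 'M[K]_d, (forall h, stablemx U (rho h)) ->
        U = 0 \/ row_full U].

Definition iso_rep (d1 d2 : nat) (rho1 : H -> 'M[K]_d1) (rho2 : H -> 'M[K]_d2)
  : Prop :=
  exists P : 'M[K]_(d1, d2),
    [/\ row_free P, row_full P & forall h, rho1 h *m P = P *m rho2 h].

Definition irr_system (r : nat) (d : 'I_r -> nat)
  (rho : forall i, H -> 'M[K]_(d i)) : Prop :=
  [/\ forall i, simple_rep (rho i),
      forall i j, iso_rep (rho i) (rho j) -> i = j &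
      forall (e : nat) (sigma : H -> 'M[K]_e), simple_rep sigma ->
        exists i, iso_rep sigma (rho i)].

Definition symmetrizing_form (tau : H -> K) : Prop :=
  [/\ (forall (k : K) u v, tau (k *: u + v) = k * tau u + tau v), forall a b, tau (a * b) = tau (b * a) &
      forall a, (forall b, tau (a * b) = 0) -> a = 0].

Definition anti_involution (dag : H -> H) : Prop :=
  [/\ linear dag, forall a b, dag (a * b) = dag b * dag a &
      forall a, dag (dag a) = a].

Definition dual_basis (n : nat) (tau : H -> K) (B Bv : n.-tuple H) : Prop :=
  forall i j : 'I_n, tau (tnth B j * tnth Bv i) = (i == j)%:R.

Definition nu (n : nat) (B0 : n.-tuple H) (dE : nat) (rhoE : H -> 'M[K]_dE)
  (cE : K) : K :=
  (cE * dE%:R)^-1 * \sum_(j < n) \tr (rhoE (tnth B0 j * tnth B0 j)).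

End Defs.

(* Main.v *)
Require Import Defs.
From HB Require Import structures.
From mathcomp Require Import all_boot all_order all_algebra falgebra.
Import GRing.Theory.
Local Open Scope ring_scope.

Set Implicit Arguments.
Section Aux.
Variables (K : fieldType) (U : lmodType K) (V : lmodType K) (f : U -> V).
Hypothesis fL : forall (k : K) u v, f (k *: u + v) = k *: f u + f v.
Lemma f0 : f 0 = 0.
Proof. have h := fL 1 0 0; rewrite scaler0 addr0 scale1r in h.
by apply: (addrI (f 0)); rewrite addr0 -h. Qed.
Lemma fZ k u : f (k *: u) = k *: f u.
Proof. by have := fL k u 0; rewrite !addr0 f0 addr0. Qed.
Lemma fD u v : f (u + v) = f u + f v.
Proof. by have := fL 1 u v; rewrite !scale1r. Qed.
Lemma fsum (I : Type) (r : seq I) (P : pred I) (F : I -> U) :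
  f (\sum_(i <- r | P i) F i) = \sum_(i <- r | P i) f (F i).
Proof. by apply: (big_rec2 (fun a b => f a = b)) => [|i x y _ <-]; rewrite ?f0 ?fD. Qed.
End Aux.

Section AuxT.
Variables (K : fieldType) (U : lmodType K) (f : U -> K).
Hypothesis fL : forall (k : K) u v, f (k *: u + v) = k * f u + f v.
Lemma t0 : f 0 = 0.
Proof. have h := fL 1 0 0; rewrite scaler0 addr0 mul1r in h.
by apply: (addrI (f 0)); rewrite addr0 -h. Qed.
Lemma tZ k u : f (k *: u) = k * f u.
Proof. by have := fL k u 0; rewrite !addr0 t0 addr0. Qed.
Lemma tD u v : f (u + v) = f u + f v.
Proof. by have := fL 1 u v; rewrite !scale1r mul1r. Qed.
Lemma tN u : f (- u) = - f u.
Proof. by rewrite -scaleN1r tZ mulN1r. Qed.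
Lemma tsum (I : Type) (r : seq I) (P : pred I) (F : I -> U) :
  f (\sum_(i <- r | P i) F i) = \sum_(i <- r | P i) f (F i).
Proof. by apply: (big_rec2 (fun a b => f a = b)) => [|i x y _ <-]; rewrite ?t0 ?tD. Qed.
End AuxT.
Arguments t0 {K U f}. Arguments tZ {K U f}. Arguments tD {K U f}. Arguments tN {K U f}. Arguments tsum {K U f} fL {I} r P F.
Arguments f0 {K U V f}. Arguments fZ {K U V f}. Arguments fD {K U V f}. Arguments fsum {K U V f} fL {I} r P F.

Unset Implicit Arguments.
Theorem proposition2p6 (K : fieldType) (H : falgType K)
  (tau : H -> K) (dag : H -> H)
  (r : nat) (d : 'I_r -> nat) (rho : forall i : 'I_r, H -> 'M[K]_(d i))
  (c : 'I_r -> K) (B0 B0v : (\dim {:H}).-tuple H) :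
  [pchar K] =i pred0 ->
  split_semisimple H ->
  symmetrizing_form tau ->
  anti_involution dag ->
  irr_system rho ->
  (forall i, c i != 0) ->
  (forall h, tau h = \sum_(i < r) (c i)^-1 * \tr (rho i h)) ->
  basis_of {:H} B0 ->
  dual_basis tau B0 B0v ->
  (forall j, dag (tnth B0 j) = tnth B0v j) ->
  lin_trace dag = \sum_(i < r) nu B0 (rho i) (c i) * (d i)%:R
  /\ (B0 =i B0v ->
      #|[set j | tnth B0v j == tnth B0 j]|%:R
        = \sum_(i < r) nu B0 (rho i) (c i) * (d i)%:R).
Proof.
move=> ch0 _ [tauL tauC tauN] [dagL dagM dagK] [irrS _ _] cnz tauE bB0 dual dagB.
pose n := \dim {:H}.
pose b := tnth B0; pose bv := tnth B0v.
have dualC : forall i j, tau (bv i * b j) = (i == j)%:R.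
  by move=> i j; rewrite tauC dual.
have expB : forall x : H, x = \sum_j coord B0 j x *: b j.
  move=> x; rewrite {1}(coord_basis bB0 (memvf x)).
  by apply: eq_bigr => j _; rewrite /b (tnth_nth 0).
have expBv : forall x : H, x = \sum_j tau (x * b j) *: bv j.
  move=> x; apply/eqP; rewrite eq_sym -subr_eq0; apply/eqP.
  apply: tauN => z; rewrite (expB z) mulr_sumr (tsum tauL).
  apply: big1 => k _; rewrite -scalerAr (tZ tauL) mulrBl (tD tauL) (tN tauL).
  rewrite mulr_suml (tsum tauL).
  rewrite (bigD1 k) //= big1 ?addr0.
    by rewrite -scalerAl (tZ tauL) dualC eqxx mulr1 subrr mulr0.
  by move=> j /negPf jk; rewrite -scalerAl (tZ tauL) dualC jk mulr0.
have sumbb : \sum_(i < r) nu B0 (rho i) (c i) * (d i)%:R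
             = \sum_j tau (b j * b j).
  rewrite (eq_bigr (fun i => \sum_j (c i)^-1 * \tr (rho i (b j * b j)))).
    by rewrite exchange_big /=; apply: eq_bigr => j _; rewrite tauE.
  move=> i _; rewrite /nu -mulr_sumr.
  have dnz : (d i)%:R != 0 :> K.
    by rewrite (proj1 (pcharf0P K) ch0); case: (irrS i) => _ /lt0n_neq0.
  by rewrite mulrAC invfM -(mulrA (c i)^-1) mulVf // mulr1.
split.
  rewrite sumbb /lin_trace.
  have dL : forall (k : K) (u v : H), dag (k *: u + v) = k *: dag u + dag v := dagL.
  pose E := vbasis (fullv : {vspace H}).
  transitivity (\sum_i \sum_j tau (tnth E i * b j) * coord E i (b j)).
    apply: eq_bigr => i _; rewrite {1}(expBv (tnth E i)) (fsum dL) linear_sum.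
    apply: eq_bigr => j _; rewrite (fZ dL) /bv -dagB dagK linearZ.
    by [].
  rewrite exchange_big; apply: eq_bigr => j _ /=.
  transitivity (tau ((\sum_i coord E i (b j) *: E`_i) * b j)); last first.
    by rewrite -coord_vbasis ?memvf.
  rewrite mulr_suml (tsum tauL); apply: eq_bigr => i _.
  by rewrite -scalerAl (tZ tauL) mulrC (tnth_nth 0).
move=> eqB; rewrite sumbb.
have key : forall j, tau (b j * b j) = (bv j == b j)%:R.
  move=> j; have : b j \in B0v by rewrite -eqB mem_tnth.
  case/tnthP => k hk; rewrite [X in tau (_ * X)]hk dual; congr ((nat_of_bool _)%:R).
  apply/idP/idP.
    by move/eqP=> ekj; subst k; rewrite hk.
  move/eqP=> e; have h1 := dual k j.
  have ekj : tnth B0v k = tnth B0v j by rewrite -hk -e.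
  rewrite ekj dual eqxx in h1.
  by case: (k == j) h1 => // /eqP; rewrite oner_eq0.
rewrite (eq_bigr _ (fun j _ => key j)) -natr_sum; congr (_%:R).
rewrite -sum1_card big_mkcond /=; apply: eq_bigr => j _.
by rewrite inE; case: (_ == _).
Qed.
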